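(* For every positive integer $n$ and every $w\in\mathfrak{H}$, $S_\hbar^t\bigl(\rho_{n,t}^{(\hbar)}(w)\bigr)=\rho_{n,0}^{(\hbar)}(w)$.
   Context: Let $\hbar,t$ be formal variables and $\mathfrak{H}=\mathbb{Q}[\hbar,t]\langle x,y\rangle$; $\mathfrak{H}^1=\mathbb{Q}[\hbar,t]+\mathfrak{H}y$, $z_j=x^{j-1}y$. Let $z_i\circ_+ z_j=z_{i+j}+\hbar z_{i+j-1}$ on the $\mathbb{Q}[\hbar,t]$-span of the $z_j$, extended to an action on $\mathfrak{H}^1$ by $z_i\circ_+1=0$, $z_i\circ_+(z_jw)=(z_i\circ_+z_j)w$. Let $S_\hbar^t:\mathfrak{H}^1\to\mathfrak{H}^1$ be the $\mathbb{Q}[\hbar,t]$-linear map with $S_\hbar^t(1)=1$, $S_\hbar^t(z_kw)=z_kS_\hbar^t(w)+t\,z_k\circ_+S_\hbar^t(w)$ for words $w\in\mathfrak{H}^1$. Let $\gamma_\hbar^t$ be the algebra automorphism of $\mathfrak{H}$ with $\gamma_\hbar^t(x)=x$, $\gamma_\hbar^t(y)=tx+y+\hbar t$. For $n\ge1$, make $\mathfrak{H}^{\otimes(n+1)}$ (tensor over $\mathbb{Q}[\hbar,t]$) an $\mathfrak{H}$-bimodule by $a\diamond(w_1\otimes\cdots\otimes w_{n+1})=w_1\otimes\cdots\otimes w_n\otimes aw_{n+1}$ and $(w_1\otimes\cdots\otimes w_{n+1})\diamond b=w_1b\otimes w_2\otimes\cdots\otimes w_{n+1}$. Let $\mathcal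 C_{n,t}^{(\hbar)}:\mathfrak{H}\to\mathfrak{H}^{\otimes(n+1)}$ be the $\mathbb{Q}[\hbar,t]$-linear map with $\mathcal C_{n,t}^{(\hbar)}(x)=-\mathcal C_{n,t}^{(\hbar)}(y)=x\otimes((1-t)x+y-\hbar t)^{\otimes(n-1)}\otimes y$ and $\mathcal C_{n,t}^{(\hbar)}(vw)=\mathcal C_{n,t}^{(\hbar)}(v)\diamond(\gamma_\hbar^t)^{-1}(w)+(\gamma_\hbar^t)^{-1}(v)\diamond\mathcal C_{n,t}^{(\hbar)}(w)$ (so $\mathcal C_{n,t}^{(\hbar)}(1)=0$). Let $M_n:\mathfrak{H}^{\otimes(n+1)}\to\mathfrak{H}$ be multiplication $w_1\otimes\cdots\otimes w_{n+1}\mapsto w_1\cdots w_{n+1}$, and $\rho_{n,t}^{(\hbar)}=M_n\circ\mathcal C_{n,t}^{(\hbar)}$; $\rho_{n,0}^{(\hbar)}$ denotes the same map with $t=0$. The map $\rho_{n,t}^{(\hbar)}$ takes values in $\mathfrak{H}y\subset\mathfrak{H}^1$, so $S_\hbar^t$ can be applied. *)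

(* Defs.v *)
From HB Require Import structures.
From mathcomp Require Import all_boot all_order all_algebra.
From mathcomp Require Import finmap.
From mathcomp.multinomials Require Import monalg.
Set Implicit Arguments. Unset Strict Implicit. Unset Printing Implicit Defensive.
Import GRing.Theory.
Local Open Scope ring_scope.

(* Coefficient ring Q[hbar,t] := {poly {poly rat}} ;
   hbar is the inner variable, t the outer one. *)
Definition K : comRingType := {poly {poly rat}}.
Definition hb : K := ('X : {poly rat})%:P.
Definition tv : K := 'X.

(* The free algebra H = Q[hbar,t]<x,y> : the monoid algebra of the free
   monoid on two letters; letter [true] is x, letter [false] is y. *)
Definition H := {malg K[{fmonom bool}]}.
Definition wd (s : seq bool) : H := << FMonom s >>.
Definition x : H := wd [:: true].
Definition y : H := wd [:: false].
Definition z (k : nat) : H := x ^+ k.-1 * y.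

Definition lin {M : choiceType} {V : lmodType K} (h : M -> V)
  (g : {malg K[M]}) : V := \sum_(m <- msupp g) g@_m *: h m.

Definition subst (a b : H) : H -> H :=
  lin (fun m : {fmonom bool} => \prod_(c <- fmonom_val m) (if c then a else b)).

Definition gamma (t : K) : H -> H := subst x (t *: x + y + (hb * t) *: 1).
Definition gammainv (t : K) : H -> H := subst x (y - t *: x - (hb * t) *: 1).

(* H^{(n+1)} := tensor power (over K) of H, free on (n+1)-tuples of words. *)
Definition Tn (n : nat) := {malg K[{ffun 'I_n.+1 -> {fmonom bool}}]}.

(* bimodule structure: a <> w = w_1 (x) ... (x) a w_{n+1},
                         w <> b = w_1 b (x) w_2 (x) ... *)
Definition lact (n : nat) (a : H) (u : Tn n) : Tn n :=
  lin (fun m : {fmonom bool} => lin (fun f : {ffun 'I_n.+1 -> {fmonom bool}} =>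
    << [ffun i => if i == ord_max then FMonom (fmonom_val m ++ fmonom_val (f i))
                  else f i] >> : Tn n) u) a.
Definition ract (n : nat) (u : Tn n) (b : H) : Tn n :=
  lin (fun m : {fmonom bool} => lin (fun f : {ffun 'I_n.+1 -> {fmonom bool}} =>
    << [ffun i => if i == ord0 then FMonom (fmonom_val (f i) ++ fmonom_val m)
                  else f i] >> : Tn n) u) b.

(* Pure tensor u_0 (x) u_1 (x) ... (x) u_n (multilinear expansion). *)
Definition extend (n : nat) (f : {ffun 'I_n.+1 -> {fmonom bool}})
  (m : {fmonom bool}) : {ffun 'I_n.+2 -> {fmonom bool}} :=
  [ffun i => if unlift ord_max i is Some j then f j else m].

Fixpoint tens (n : nat) : ('I_n.+1 -> H) -> Tn n :=
  match n return ('I_n.+1 -> H) -> Tn n with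
  | 0 => fun u => lin (fun m : {fmonom bool} =>
            << [ffun _ => m] >> : Tn 0) (u ord0)
  | n'.+1 => fun u =>
      lin (fun f : {ffun 'I_n'.+1 -> {fmonom bool}} =>
             lin (fun m : {fmonom bool} => << extend f m >> : Tn n'.+1)
                 (u ord_max))
          (tens (fun j => u (widen_ord (leqnSn _) j)))
  end.

Definition Cx (n : nat) (t : K) : Tn n :=
  tens (fun i : 'I_n.+1 => if (i == 0 :> nat) then x
                           else if (i == n :> nat) then y
                           else (1 - t) *: x + y - (hb * t) *: 1).

(* C on words, via C(a w) = C(a) <> gamma^{-1}(w) + gamma^{-1}(a) <> C(w),
   C(1) = 0, C(y) = - C(x). *)
Fixpoint Cw (n : nat) (t : K) (s : seq bool) : Tn n :=
  match s with
  | [::] => 0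
  | a :: s' =>
      ract (if a then Cx n t else - Cx n t) (gammainv t (wd s'))
      + lact (gammainv t (wd [:: a])) (Cw n t s')
  end.

Definition C (n : nat) (t : K) : H -> Tn n :=
  lin (fun m : {fmonom bool} => Cw n t (fmonom_val m)).

Definition Mn (n : nat) : Tn n -> H :=
  lin (fun f : {ffun 'I_n.+1 -> {fmonom bool}} =>
         wd (flatten [seq fmonom_val (f i) | i <- enum 'I_n.+1])).

Definition rho (n : nat) (t : K) (w : H) : H := Mn (C n t w).

(* z_i o_+ (x^j s) ; the case x^j y s' = z_{j+1} s' gives
   (z_{i+j+1} + hbar z_{i+j}) s' ; z_i o_+ 1 = 0.
   (words x^j with j > 0 are not in H^1; value 0 there is a junk value.) *)
Fixpoint circw (i j : nat) (s : seq bool) : H :=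
  match s with
  | [::] => 0
  | a :: s' => if a then circw i j.+1 s'
               else (z (i + j.+1) + hb *: z (i + j)) * wd s'
  end.
Definition circ (i : nat) : H -> H :=
  lin (fun m : {fmonom bool} => circw i 0 (fmonom_val m)).

(* Sx t k s = S_hbar^t (x^k s) for x^k s in H^1:
   S(1) = 1, S(z_{k+1} s') = z_{k+1} S(s') + t z_{k+1} o_+ S(s').
   (words x^k, k > 0, are not in H^1; value 0 there is a junk value.) *)
Fixpoint Sx (t : K) (k : nat) (s : seq bool) : H :=
  match s with
  | [::] => if k is 0 then 1 else 0
  | a :: s' => if a then Sx t k.+1 s'
               else let r := Sx t 0 s' in z k.+1 * r + t *: circ k.+1 r
  end.
Definition S (t : K) : H -> H :=
  lin (fun m : {fmonom bool} => Sx t 0 (fmonom_val m)).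

(* Main.v *)
Require Import Defs.
From HB Require Import structures.
From mathcomp Require Import all_boot all_order all_algebra.
From mathcomp Require Import finmap.
From mathcomp.multinomials Require Import monalg.
Set Implicit Arguments. Unset Strict Implicit. Unset Printing Implicit Defensive.
Import GRing.Theory.
Local Open Scope ring_scope.

Definition islin (V W : lmodType K) (F : V -> W) :=
  (forall u v, F (u + v) = F u + F v) /\ (forall c u, F (c *: u) = c *: F u).

Section LinTheory.
Variables (V W : lmodType K).

Lemma islin0 (F : V -> W) : islin F -> F 0 = 0.
Proof. by case=> _ FZ; rewrite -(scale0r 0) FZ scale0r. Qed.

Lemma islin_sum (F : V -> W) (I : Type) (r : seq I) (P : pred I) (G : I -> V) :
  islin F -> F (\sum_(i <- r | P i) G i) = \sum_(i <- r | P i) F (G i).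
Proof.
move=> hF; apply: (big_morph F); [exact: hF.1 | exact: islin0].
Qed.

Lemma islinN (F : V -> W) u : islin F -> F (- u) = - F u.
Proof. by case=> _ FZ; rewrite -scaleN1r FZ scaleN1r. Qed.
End LinTheory.

Section Lin.
Variables (M : choiceType) (V : lmodType K).

Lemma monU (c : K) (m : M) : << c *g m >> = c *: (<< m >> : {malg K[M]}).
Proof.
by apply/malgP=> k; rewrite mcoeffZ !mcoeffU mulrnAr mulr1.
Qed.

Lemma linEw (h : M -> V) (g : {malg K[M]}) (d : {fset M}) :
  (msupp g `<=` d)%fset -> lin h g = \sum_(m <- d) g@_m *: h m.
Proof.
move=> le; rewrite /lin (big_fset_incl _ le) //= => m _ /mcoeff_outdom ->.
by rewrite scale0r.
Qed.

Lemma islin_lin (h : M -> V) : islin (lin h).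
Proof.
split.
  move=> u v; rewrite (@linEw _ _ (msupp u `|` msupp v)%fset) ?msuppD_le //.
  rewrite (@linEw _ u (msupp u `|` msupp v)%fset) ?fsubsetUl //.
  rewrite (@linEw _ v (msupp u `|` msupp v)%fset) ?fsubsetUr //.
  by rewrite -big_split; apply: eq_bigr => m _; rewrite mcoeffD scalerDl.
move=> c u; rewrite (@linEw _ _ (msupp u)) ?msuppZ_le // /lin scaler_sumr.
by apply: eq_bigr => m _; rewrite mcoeffZ scalerA.
Qed.

Lemma linU (h : M -> V) (c : K) (m : M) : lin h << c *g m >> = c *: h m.
Proof. by rewrite (linEw _ msuppU_le) big_seq_fset1 mcoeffUU. Qed.

Lemma linU1 (h : M -> V) (m : M) : lin h << m >> = h m.
Proof. by rewrite linU scale1r. Qed.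

Lemma lin_comp (W : lmodType K) (F : V -> W) (h : M -> V) g :
  islin F -> F (lin h g) = lin (fun m => F (h m)) g.
Proof.
move=> hF; rewrite /lin islin_sum //; apply: eq_bigr => m _.
by rewrite hF.2.
Qed.

Lemma lin_uniq (F : {malg K[M]} -> V) g :
  islin F -> F g = lin (fun m => F << m >>) g.
Proof.
move=> hF; rewrite {1}(monalgE g) islin_sum //; apply: eq_bigr => m _.
by rewrite monU hF.2.
Qed.

Lemma lin_ext (h1 h2 : M -> V) g : (forall m, h1 m = h2 m) -> lin h1 g = lin h2 g.
Proof. by move=> e; apply: eq_bigr => m _; rewrite e. Qed.

Lemma lin_swap (M2 : choiceType) (G : M -> M2 -> V) g (g2 : {malg K[M2]}) :
  lin (fun m => lin (fun m2 => G m m2) g2) g = lin (fun m2 => lin (fun m => G m m2) g) g2.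
Proof.
rewrite /lin.
rewrite (eq_bigr (fun m => \sum_(m2 <- msupp g2) g@_m *: (g2@_m2 *: G m m2))); last first.
  by move=> m _; rewrite scaler_sumr.
rewrite exchange_big /=; apply: eq_bigr => m2 _; rewrite scaler_sumr.
by apply: eq_bigr => m _; rewrite !scalerA mulrC.
Qed.

End Lin.

Lemma scalerAr_H (c : K) (a b : H) : c *: (a * b) = a * (c *: b).
Proof.
apply/malgP=> k.
rewrite mcoeffZ [X in _ * X = _](@mcoeffMl _ _ a b k).
rewrite (@mcoeffMlw _ _ (msupp a) (msupp b) a (c *: b)); last exact: msuppZ_le.
  2: exact: fsubset_refl.
rewrite mulr_sumr; apply: eq_bigr => k1 _; rewrite mulr_sumr; apply: eq_bigr => k2 _.
by rewrite mcoeffZ mulrnAr mulrCA.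
Qed.

Lemma islin_mul (a b : H) : islin (fun v : H => a * v * b).
Proof.
split; first by move=> u v; rewrite mulrDr mulrDl.
by move=> c u; rewrite -scalerAr_H -scalerAl.
Qed.

Lemma lin_mulr (M : choiceType) (h : M -> H) g (q : H) :
  lin (fun m => h m * q) g = lin h g * q.
Proof. by rewrite /lin mulr_suml; apply: eq_bigr => m _; rewrite scalerAl. Qed.

Lemma lin_mull (M : choiceType) (h : M -> H) g (q : H) :
  lin (fun m => q * h m) g = q * lin h g.
Proof. by rewrite /lin mulr_sumr; apply: eq_bigr => m _; rewrite scalerAr_H. Qed.

Lemma lin_id (M : choiceType) (g : {malg K[M]}) : lin (fun m => << m >>) g = g.
Proof. by rewrite [RHS]monalgE; apply: eq_bigr => m _; rewrite monU. Qed.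

Lemma monM (m1 m2 : {fmonom bool}) :
  (<< m1 >> : H) * << m2 >> = << FMonom (fmonom_val m1 ++ fmonom_val m2) >>.
Proof.
rewrite malgM_def fgmulUU mulr1; congr (<< _ *g _ >>).
by apply/eqP; rewrite fmP /= fmM.
Qed.

Lemma wd_cat s1 s2 : wd (s1 ++ s2) = wd s1 * wd s2.
Proof. by rewrite /wd monM. Qed.

Lemma wd_nil : wd [::] = 1.
Proof.
rewrite /wd; suff -> : FMonom [::] = (mone : {fmonom bool}) by [].
by apply/eqP; rewrite fmP fm1.
Qed.

Lemma wd_cons c s : wd (c :: s) = (if c then x else y) * wd s.
Proof. by rewrite -cat1s wd_cat; case: c. Qed.

Lemma wd_prod s : wd s = \prod_(c <- s) (if c then x else y).
Proof.
elim: s => [|c s IH]; first by rewrite wd_nil big_nil.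
by rewrite wd_cons big_cons IH.
Qed.

Lemma wdK (m : {fmonom bool}) : wd (fmonom_val m) = << m >>.
Proof. by rewrite /wd fmK. Qed.

Lemma subst_mon a b (m : {fmonom bool}) :
  subst a b << m >> = \prod_(c <- fmonom_val m) (if c then a else b).
Proof. by rewrite /subst linU1. Qed.

Lemma subst_wd a b s : subst a b (wd s) = \prod_(c <- s) (if c then a else b).
Proof. by rewrite /wd subst_mon. Qed.

Lemma islin_subst a b : islin (subst a b).
Proof. exact: islin_lin. Qed.

Lemma islin_mulr (q : H) : islin (fun p : H => p * q).
Proof. by split=> [u v|c u]; rewrite ?mulrDl ?scalerAl. Qed.

Lemma islin_mull (q : H) : islin (fun p : H => q * p).
Proof. by split=> [u v|c u]; rewrite ?mulrDr ?scalerAr_H. Qed.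

Lemma islin_o (U V W : lmodType K) (F : V -> W) (G : U -> V) :
  islin F -> islin G -> islin (fun u => F (G u)).
Proof.
move=> [FD FZ] [GD GZ]; split=> [u v|c u]; first by rewrite GD FD.
by rewrite GZ FZ.
Qed.

Lemma subst_mul a b p q : subst a b (p * q) = subst a b p * subst a b q.
Proof.
rewrite (@lin_uniq _ _ (fun p => subst a b (p * q))); last first.
  exact: (islin_o (islin_subst a b) (islin_mulr q)).
rewrite (@lin_uniq _ _ (fun p => subst a b p * subst a b q) p); last first.
  exact: (islin_o (islin_mulr _) (islin_subst a b)).
apply: lin_ext => m1.
rewrite (@lin_uniq _ _ (fun q => subst a b (<< m1 >> * q))); last first.
  exact: (islin_o (islin_subst a b) (islin_mull _)).
rewrite (@lin_uniq _ _ (fun q => subst a b << m1 >> * subst a b q) q); last first.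
  exact: (islin_o (islin_mull _) (islin_subst a b)).
apply: lin_ext => m2.
by rewrite monM !subst_mon big_cat.
Qed.

Lemma subst1 a b : subst a b 1 = 1.
Proof. by rewrite -{1}wd_nil subst_wd big_nil. Qed.

Lemma subst_x a b : subst a b x = a.
Proof. by rewrite /x subst_wd big_cons big_nil mulr1. Qed.

Lemma subst_y a b : subst a b y = b.
Proof. by rewrite /y subst_wd big_cons big_nil mulr1. Qed.

Lemma substD a b p q : subst a b (p + q) = subst a b p + subst a b q.
Proof. exact: (islin_subst a b).1. Qed.

Lemma substZ a b c p : subst a b (c *: p) = c *: subst a b p.
Proof. exact: (islin_subst a b).2. Qed.

Lemma substN a b p : subst a b (- p) = - subst a b p.
Proof. exact: islinN (islin_subst a b). Qed.

Lemma substB a b p q : subst a b (p - q) = subst a b p - subst a b q.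
Proof. by rewrite substD substN. Qed.

Lemma subst_prod a b (I : Type) (r : seq I) (F : I -> H) :
  subst a b (\prod_(i <- r) F i) = \prod_(i <- r) subst a b (F i).
Proof. by apply: big_morph; [exact: subst_mul | exact: subst1]. Qed.

Lemma subst_id p : subst x y p = p.
Proof.
rewrite {1}(@lin_uniq _ _ (subst x y) p); last exact: islin_subst.
rewrite -[RHS]lin_id; apply: lin_ext => m; rewrite subst_mon -wdK wd_prod.
by apply: eq_bigr => c _; case: c.
Qed.

Lemma subst_comp a b a' b' p :
  subst a b (subst a' b' p) = subst (subst a b a') (subst a b b') p.
Proof.
rewrite (@lin_uniq _ _ (fun p => subst a b (subst a' b' p)) p); last first.
  exact: islin_o (islin_subst _ _) (islin_subst _ _).
rewrite [RHS](@lin_uniq _ _ (subst _ _) p); last exact: islin_subst.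
apply: lin_ext => m; rewrite !subst_mon subst_prod.
by apply: eq_bigr => c _; case: c.
Qed.

Lemma subst_lin3 a b (p q r : H) c d :
  subst a b (p - c *: q - d *: r) = subst a b p - c *: subst a b q - d *: subst a b r.
Proof. by rewrite !substB !substZ. Qed.

Lemma gammaK t p : gamma t (gammainv t p) = p.
Proof.
rewrite /gamma /gammainv subst_comp subst_x.
move: (hb * t) => c.
rewrite subst_lin3 subst_y subst_x subst1.
have e : forall A B C : H, A + B + C - A - C = B.
  by move=> A B C; rewrite addrAC addrK addrC addKr.
by rewrite e subst_id.
Qed.

Lemma gammainv0 p : gammainv 0 p = p.
Proof. by rewrite /gammainv scale0r mulr0 scale0r !subr0 subst_id. Qed.

Lemma gamma_mul t p q : gamma t (p * q) = gamma t p * gamma t q.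
Proof. exact: subst_mul. Qed.
Lemma gamma1 t : gamma t 1 = 1.
Proof. exact: subst1. Qed.
Lemma gamma_x t : gamma t x = x.
Proof. exact: subst_x. Qed.
Lemma gamma_y t : gamma t y = t *: x + y + (hb * t) *: 1.
Proof. exact: subst_y. Qed.

Section Gen.
Variable R : lalgType K.
Hypothesis hA : forall (c : K) (a b : R), c *: (a * b) = a * (c *: b).

Lemma zzG (X Y : R) c i j :
  X ^+ (i + j).+1 * Y + c *: (X ^+ (i + j) * Y) = X ^+ i * (X + c *: 1) * X ^+ j * Y.
Proof.
rewrite mulrDr -hA mulr1 -exprSr mulrDl -scalerAl -!exprD.
by rewrite mulrDl -scalerAl addSn.
Qed.

Lemma cw_trueG (A X W a : R) j : a * A * X ^+ j.+1 * W = a * A * X ^+ j * (X * W).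
Proof. by rewrite exprSr !mulrA. Qed.

Lemma cw_nilG (a A X M Y : R) : a * A * X ^+ 0 * (M * Y) = a * A * M * Y.
Proof. by rewrite expr0 mulr1 mulrA. Qed.

Lemma sx_nilG (X Y : R) k : X ^+ k * Y * 1 + 0 = X ^+ k * 1 * Y.
Proof. by rewrite addr0 !mulr1. Qed.

Lemma sx_trueG (X G Y : R) k : X ^+ k.+1 * G * Y = X ^+ k * (X * G) * Y.
Proof. by rewrite exprSr !mulrA. Qed.

Lemma sx_falseG (X Y G Z : R) (t h : K) k : Z = X ^+ k * Y ->
  Z * (X ^+ 0 * G * Y) + t *: (X ^+ k.+1.-1 * (X + h *: 1) * (X ^+ 0 * G) * Y)
  = X ^+ k * ((t *: X + Y + (h * t) *: 1) * G) * Y.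
Proof.
move=> ->; rewrite expr0 !mul1r /=.
rewrite -!mulrA hA -mulrDr; congr (_ * _).
rewrite scalerAl -mulrDl; congr (_ * _).
by rewrite scalerDr scalerA [h * t]mulrC addrA [Y + _]addrC.
Qed.

Lemma s_monG (X G Y : R) : X ^+ 0 * G * Y = G * Y.
Proof. by rewrite expr0 mul1r. Qed.
End Gen.

Lemma zz i j : (0 < i)%N ->
  z (i + j.+1) + hb *: z (i + j) = x ^+ i.-1 * (x + hb *: 1) * x ^+ j * y.
Proof.
case: i => [//|i] _; rewrite /z addSn addnS /=.
exact: (zzG scalerAr_H).
Qed.

Lemma wd_y : wd [:: false] = y. Proof. by []. Qed.
Lemma wd_x : wd [:: true] = x. Proof. by []. Qed.
Lemma wd_cons_t s : wd (true :: s) = x * wd s. Proof. exact: wd_cons. Qed.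
Lemma wd_cons_f s : wd (false :: s) = y * wd s. Proof. exact: wd_cons. Qed.

Lemma circw_lem i j s : (0 < i)%N ->
  circw i j (s ++ [:: false]) = x ^+ i.-1 * (x + hb *: 1) * x ^+ j * wd (s ++ [:: false]).
Proof.
move=> i0; elim: s j => [|c s IH] j /=.
  rewrite (zz _ i0) wd_nil wd_y; exact: mulr1.
case: c => /=.
  rewrite IH wd_cons_t; exact: cw_trueG.
rewrite (zz _ i0) wd_cons_f; exact: (esym (mulrA _ _ _)).
Qed.

Lemma islin_circ i : islin (circ i).
Proof. exact: islin_lin. Qed.

Lemma mon_y (m : {fmonom bool}) : (<< m >> : H) * y = wd (fmonom_val m ++ [:: false]).
Proof. rewrite wd_cat wdK; reflexivity. Qed.

Lemma circ_lem i v : (0 < i)%N ->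
  circ i (v * y) = x ^+ i.-1 * (x + hb *: 1) * v * y.
Proof.
move=> i0.
rewrite (@lin_uniq _ _ (fun v => circ i (v * y)) v); last first.
  exact: islin_o (islin_circ i) (islin_mulr _).
rewrite [RHS](@lin_uniq _ _ (fun v => x ^+ i.-1 * (x + hb *: 1) * v * y) v); last first.
  exact: islin_mul.
apply: lin_ext => m.
rewrite mon_y /circ linU1 /= (circw_lem _ _ i0) -mon_y.
exact: cw_nilG.
Qed.

Lemma circ1 i : circ i 1 = 0.
Proof. rewrite -wd_nil /circ /wd linU1; reflexivity. Qed.

Lemma Sx_lem t k s : Sx t k (s ++ [:: false]) = x ^+ k * gamma t (wd s) * y.
Proof.
elim: s k => [|c s IH] k /=.
  rewrite circ1 scaler0 wd_nil gamma1; exact: sx_nilG.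
case: c => /=.
  rewrite IH wd_cons_t gamma_mul gamma_x; exact: sx_trueG.
rewrite IH (circ_lem _ (ltn0Sn k)) wd_cons_f gamma_mul gamma_y.
apply: (sx_falseG scalerAr_H); reflexivity.
Qed.

Lemma islin_S t : islin (S t).
Proof. exact: islin_lin. Qed.

Lemma S_lem t v : S t (v * y) = gamma t v * y.
Proof.
rewrite (@lin_uniq _ _ (fun v => S t (v * y)) v); last first.
  exact: islin_o (islin_S t) (islin_mulr _).
rewrite [RHS](@lin_uniq _ _ (fun v => gamma t v * y) v); last first.
  exact: islin_o (islin_mulr _) (islin_subst _ _).
apply: lin_ext => m.
rewrite mon_y /S linU1 /= Sx_lem wdK.
exact: s_monG.
Qed.

Definition Mg n (pre post : 'I_n.+1 -> H) (T : Tn n) : H :=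
  lin (fun f : {ffun 'I_n.+1 -> {fmonom bool}} =>
         \prod_(i < n.+1) (pre i * << f i >> * post i)) T.

Lemma islin_Mg n (pre post : 'I_n.+1 -> H) : islin (Mg pre post).
Proof. exact: islin_lin. Qed.

Lemma Mg_ext n (pre1 post1 pre2 post2 : 'I_n.+1 -> H) T :
  (forall i, pre1 i = pre2 i) -> (forall i, post1 i = post2 i) ->
  Mg pre1 post1 T = Mg pre2 post2 T.
Proof.
move=> e1 e2; apply: lin_ext => f; apply: eq_bigr => i _.
by rewrite e1 e2.
Qed.

Lemma MgU n (pre post : 'I_n.+1 -> H) f :
  Mg pre post << f >> = \prod_(i < n.+1) (pre i * << f i >> * post i).
Proof. exact: linU1. Qed.

Lemma wd_flatten (I : Type) (r : seq I) (g : I -> seq bool) :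
  wd (flatten [seq g i | i <- r]) = \prod_(i <- r) wd (g i).
Proof.
elim: r => [|a r IH]; first by rewrite big_nil wd_nil.
by rewrite /= wd_cat IH big_cons.
Qed.

Lemma Mn_Mg n (T : Tn n) : Mn T = Mg (fun _ => 1) (fun _ => 1) T.
Proof.
apply: lin_ext => f; rewrite wd_flatten [index_enum _]unlock -enumT.
by apply: eq_bigr => i _; rewrite wdK mul1r mulr1.
Qed.

Lemma lin_mon_mul (a b g : H) : lin (fun m => a * << m >> * b) g = a * g * b.
Proof.
rewrite -[in RHS](lin_id g).
exact: (esym (lin_comp (fun m => << m >>) g (islin_mul a b))).
Qed.

Lemma unlift_widen n (i : 'I_n.+1) :
  unlift ord_max (widen_ord (leqnSn n.+1) i) = Some i.
Proof.
have -> : widen_ord (leqnSn n.+1) i = lift ord_max i.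
  by apply: val_inj; rewrite /= /bump leqNgt ltn_ord add0n.
exact: liftK.
Qed.

Lemma extend_widen n (f : {ffun 'I_n.+1 -> {fmonom bool}}) m i :
  extend f m (widen_ord (leqnSn n.+1) i) = f i.
Proof. by rewrite /extend ffunE unlift_widen. Qed.

Lemma extend_max n (f : {ffun 'I_n.+1 -> {fmonom bool}}) m :
  extend f m ord_max = m.
Proof. by rewrite /extend ffunE unlift_none. Qed.

Lemma Mg_tens n (pre post u : 'I_n.+1 -> H) :
  Mg pre post (tens u) = \prod_(i < n.+1) (pre i * u i * post i).
Proof.
elim: n pre post u => [|n IH] pre post u.
  change (Mg pre post (lin (fun m : {fmonom bool} => << [ffun _ => m] >> : Tn 0) (u ord0))
    = \prod_(i < 1) (pre i * u i * post i)).
  rewrite (lin_comp _ _ (islin_Mg pre post)).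
  rewrite (@lin_ext _ _ _ (fun m => pre ord0 * << m >> * post ord0)); last first.
    by move=> m; rewrite MgU big_ord1 ffunE.
  by rewrite lin_mon_mul big_ord1.
change (Mg pre post (lin (fun f => lin (fun m => << extend f m >> : Tn n.+1) (u ord_max))
          (tens (fun j => u (widen_ord (leqnSn _) j))))
    = \prod_(i < n.+2) (pre i * u i * post i)).
rewrite (lin_comp _ _ (islin_Mg pre post)).
set P := fun f : {ffun 'I_n.+1 -> {fmonom bool}} =>
  \prod_(i < n.+1) (pre (widen_ord (leqnSn _) i) * << f i >> * post (widen_ord (leqnSn _) i)).
rewrite (@lin_ext _ _ _ (fun f => P f * (pre ord_max * u ord_max * post ord_max))); last first.
  move=> f; rewrite (lin_comp _ _ (islin_Mg pre post)).
  rewrite (@lin_ext _ _ _ (fun m => P f * (pre ord_max * << m >> * post ord_max))); last first.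
    move=> m; rewrite MgU big_ord_recr /= extend_max /P.
    rewrite [X in X * _ = _](eq_bigr (fun i => pre (widen_ord (leqnSn n.+1) i) * << f i >> * post (widen_ord (leqnSn n.+1) i))); last first.
      by move=> i _; rewrite extend_widen.
    idtac "E". reflexivity.
  by rewrite lin_mull lin_mon_mul.
rewrite lin_mulr big_ord_recr; congr (_ * _).
exact: IH.
Qed.

Lemma assoc4G (R : ringType) (a c b d r : R) : a * (c * b) * d * r = a * c * (b * d) * r.
Proof. by rewrite !mulrA. Qed.

Lemma assoc4G' (R : ringType) (r a b c d : R) : r * (a * (b * c) * d) = r * (a * b * c * d).
Proof. by rewrite !mulrA. Qed.

Lemma lift0_neq n (i : 'I_n) : (lift ord0 i == ord0 :> 'I_n.+1) = false.
Proof. by rewrite eq_sym (negbTE (neq_lift _ _)). Qed.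

Lemma widen_neq_max n (i : 'I_n) : (widen_ord (leqnSn n) i == ord_max) = false.
Proof.
apply/eqP => /(congr1 val) /= h; move: (ltn_ord i); rewrite h ltnn //.
Qed.

Lemma Mg_ract n (pre post : 'I_n.+1 -> H) (T : Tn n) (b : H) :
  Mg pre post (ract T b) = Mg pre (fun i => if i == ord0 then b * post i else post i) T.
Proof.
rewrite /ract (lin_comp _ _ (islin_Mg pre post)).
rewrite (@lin_ext _ _ _ (fun m : {fmonom bool} => lin (fun f : {ffun 'I_n.+1 -> {fmonom bool}} => Mg pre post (<< [ffun i => if i == ord0
    then FMonom (fmonom_val (f i) ++ fmonom_val m) else f i] >> : Tn n)) T)); last first.
  by move=> m; rewrite (lin_comp _ _ (islin_Mg pre post)).
rewrite lin_swap; apply: lin_ext => f.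
set Rest := \prod_(i < n) (pre (lift ord0 i) * << f (lift ord0 i) >> * post (lift ord0 i)).
rewrite (@lin_ext _ _ _ (fun m => pre ord0 * (<< f ord0 >> * << m >>) * post ord0 * Rest)); last first.
  move=> m; rewrite MgU big_ord_recl /= ffunE eqxx monM.
  rewrite [X in _ * X = _](eq_bigr (fun i => pre (lift ord0 i) * << f (lift ord0 i) >> * post (lift ord0 i))).
    reflexivity.
  by move=> i _; rewrite ffunE lift0_neq.
rewrite big_ord_recl /= ?eqxx.
rewrite [X in _ = _ * X](eq_bigr (fun i => pre (lift ord0 i) * << f (lift ord0 i) >> * post (lift ord0 i))); last first.
  by move=> i _; rewrite ?lift0_neq.
have hl : islin (fun v => pre ord0 * (<< f ord0 >> * v) * post ord0 * Rest).
  exact: (islin_o (islin_mulr Rest) (islin_o (islin_mul _ _) (islin_mull _))).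
transitivity (pre ord0 * (<< f ord0 >> * b) * post ord0 * Rest).
  exact: (esym (lin_uniq b hl)).
exact: assoc4G.
Qed.

Lemma Mg_lact n (pre post : 'I_n.+1 -> H) (T : Tn n) (a : H) :
  Mg pre post (lact a T) = Mg (fun i => if i == ord_max then pre i * a else pre i) post T.
Proof.
rewrite /lact (lin_comp _ _ (islin_Mg pre post)).
rewrite (@lin_ext _ _ _ (fun m : {fmonom bool} => lin (fun f : {ffun 'I_n.+1 -> {fmonom bool}} => Mg pre post (<< [ffun i => if i == ord_max
    then FMonom (fmonom_val m ++ fmonom_val (f i)) else f i] >> : Tn n)) T)); last first.
  by move=> m; rewrite (lin_comp _ _ (islin_Mg pre post)).
rewrite lin_swap; apply: lin_ext => f.
set Rest := \prod_(i < n) (pre (widen_ord (leqnSn n) i) * << f (widen_ord (leqnSn n) i) >>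
   * post (widen_ord (leqnSn n) i)).
rewrite (@lin_ext _ _ _ (fun m => Rest * (pre ord_max * (<< m >> * << f ord_max >>) * post ord_max))); last first.
  move=> m; rewrite MgU big_ord_recr /= ffunE eqxx monM.
  rewrite [X in X * _ = _](eq_bigr (fun i => pre (widen_ord (leqnSn n) i) * << f (widen_ord (leqnSn n) i) >> * post (widen_ord (leqnSn n) i))).
    reflexivity.
  by move=> i _; rewrite ffunE widen_neq_max.
rewrite big_ord_recr /= ?eqxx.
rewrite [X in _ = X * _](eq_bigr (fun i => pre (widen_ord (leqnSn n) i) * << f (widen_ord (leqnSn n) i) >> * post (widen_ord (leqnSn n) i))); last first.
  by move=> i _; rewrite ?widen_neq_max.
have hl : islin (fun v => Rest * (pre ord_max * (v * << f ord_max >>) * post ord_max)).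
  exact: (islin_o (islin_mull Rest) (islin_o (islin_mul _ _) (islin_mulr _))).
transitivity (Rest * (pre ord_max * (a * << f ord_max >>) * post ord_max)).
  exact: (esym (lin_uniq a hl)).
exact: assoc4G'.
Qed.

Definition cx n (t : K) (i : 'I_n.+1) : H :=
  if (i == 0 :> nat) then x else if (i == n :> nat) then y
  else (1 - t) *: x + y - (hb * t) *: 1.
Arguments cx : clear implicits.

Lemma Cx_tens n t : Cx n t = tens (cx n t).
Proof. reflexivity. Qed.

Definition preA n (a : H) (i : 'I_n.+1) : H := if i == ord_max then a else 1.
Definition postB n (b : H) (i : 'I_n.+1) : H := if i == ord0 then b else 1.

Definition VC n t (a b : H) : H :=
  (\prod_(i < n) (preA a (widen_ord (leqnSn n) i) * cx n t (widen_ord (leqnSn n) i)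
     * postB b (widen_ord (leqnSn n) i))) * a.

Lemma preA_max n (a : H) : preA a (ord_max : 'I_n.+1) = a.
Proof. by rewrite /preA eqxx. Qed.

Lemma postB_max n (b : H) : (0 < n)%N -> postB b (ord_max : 'I_n.+1) = 1.
Proof.
move=> n0; rewrite /postB; case: eqP => // /(congr1 val) /= h.
by move: n0; rewrite h.
Qed.

Lemma cx_max n t : (0 < n)%N -> cx n t ord_max = y.
Proof. by move=> n0; rewrite /cx /= eqn0Ngt n0 /= eqxx. Qed.

Lemma lastG (R : ringType) (P a Y : R) : P * (a * Y * 1) = P * a * Y.
Proof. by rewrite mulr1 mulrA. Qed.

Lemma Mg_Cx n t a b : (0 < n)%N -> Mg (preA a) (postB b) (Cx n t) = VC n t a b * y.
Proof.
move=> n0; rewrite Cx_tens Mg_tens big_ord_recr /=.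
rewrite preA_max (postB_max _ n0) (cx_max _ n0).
exact: lastG.
Qed.

Lemma gamma0 t : gamma t 0 = 0.
Proof. exact: (islin0 (islin_subst _ _)). Qed.
Lemma gammaD t p q : gamma t (p + q) = gamma t p + gamma t q.
Proof. exact: substD. Qed.
Lemma gammaN t p : gamma t (- p) = - gamma t p.
Proof. exact: substN. Qed.
Lemma gamma_prod t (I : Type) (r : seq I) (F : I -> H) :
  gamma t (\prod_(i <- r) F i) = \prod_(i <- r) gamma t (F i).
Proof. exact: subst_prod. Qed.

Lemma subst_u a b (c1 c2 : K) (p q r : H) :
  subst a b (c1 *: p + q - c2 *: r) = c1 *: subst a b p + subst a b q - c2 *: subst a b r.
Proof. by rewrite substB substD !substZ. Qed.

Lemma uG (V : lmodType K) (X Y O : V) (t c : K) :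
  (1 - t) *: X + (t *: X + Y + c *: O) - c *: O = X + Y.
Proof. by rewrite !addrA addrK -scalerDl subrK scale1r. Qed.

Lemma u0G (V : lmodType K) (X Y O : V) (h : K) :
  (1 - 0) *: X + Y - (h * 0) *: O = X + Y.
Proof. by rewrite subr0 scale1r mulr0 scale0r subr0. Qed.

Lemma gamma_u t : gamma t ((1 - t) *: x + y - (hb * t) *: 1) = x + y.
Proof.
rewrite /gamma subst_u subst_x subst_y subst1.
move: (hb * t) => c.
exact: uG.
Qed.

Lemma gamma_if t (b : bool) (p q p' q' : H) :
  gamma t p = p' -> gamma t q = q' -> gamma t (if b then p else q) = if b then p' else q'.
Proof. by case: b. Qed.

Lemma gamma_cx n t (j : 'I_n) :
  gamma t (cx n t (widen_ord (leqnSn n) j)) = cx n 0 (widen_ord (leqnSn n) j).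
Proof.
have e : (widen_ord (leqnSn n) j == n :> nat) = false by exact: (ltn_eqF (ltn_ord j)).
rewrite /cx; apply: gamma_if; first exact: gamma_x.
rewrite e; exact: (etrans (gamma_u t) (esym (u0G x y 1 hb))).
Qed.

Lemma gamma_preA n t a (i : 'I_n.+1) : gamma t (preA a i) = preA (gamma t a) i.
Proof. rewrite /preA; apply: gamma_if; [reflexivity | exact: gamma1]. Qed.

Lemma gamma_postB n t b (i : 'I_n.+1) : gamma t (postB b i) = postB (gamma t b) i.
Proof. rewrite /postB; apply: gamma_if; [reflexivity | exact: gamma1]. Qed.

Lemma gamma_VC n t a b : gamma t (VC n t a b) = VC n 0 (gamma t a) (gamma t b).
Proof.
rewrite /VC gamma_mul gamma_prod.
rewrite [X in X * _ = _](eq_bigr (fun i => preA (gamma t a) (widen_ord (leqnSn n) i)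
   * cx n 0 (widen_ord (leqnSn n) i) * postB (gamma t b) (widen_ord (leqnSn n) i))).
  reflexivity.
move=> i _; rewrite !gamma_mul gamma_preA gamma_postB gamma_cx; reflexivity.
Qed.

Lemma postB_upd n (g b : H) (i : 'I_n.+1) :
  (if i == ord0 then g * postB b i else postB b i) = postB (g * b) i.
Proof. by rewrite /postB; case: (i == ord0). Qed.

Lemma preA_upd n (g a : H) (i : 'I_n.+1) :
  (if i == ord_max then preA a i * g else preA a i) = preA (a * g) i.
Proof. by rewrite /preA; case: (i == ord_max). Qed.

Definition sg (c : bool) (v : H) := if c then v else - v.

Lemma Mg_sg n (pre post : 'I_n.+1 -> H) c T :
  Mg pre post (if c then T else - T) = sg c (Mg pre post T).
Proof. by case: c => //=; rewrite (islinN _ (islin_Mg _ _)). Qed.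

Lemma gamma_sg t c v : gamma t (sg c v) = sg c (gamma t v).
Proof. by case: c => //=; rewrite gammaN. Qed.

Lemma sgG c (A B Y : H) : sg c (A * Y) + B * Y = (sg c A + B) * Y.
Proof. by case: c; rewrite /= mulrDl ?mulNr. Qed.

Lemma Mg_stepAB n (a b g1 g2 : H) (T1 T2 : Tn n) :
  Mg (preA a) (postB b) (ract T1 g1 + lact g2 T2)
  = Mg (preA a) (postB (g1 * b)) T1 + Mg (preA (a * g2)) (postB b) T2.
Proof.
have e1 : Mg (preA a) (postB b) (ract T1 g1) = Mg (preA a) (postB (g1 * b)) T1.
  by rewrite Mg_ract; apply: Mg_ext => i; [by [] | exact: postB_upd].
have e2 : Mg (preA a) (postB b) (lact g2 T2) = Mg (preA (a * g2)) (postB b) T2.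
  by rewrite Mg_lact; apply: Mg_ext => i; [exact: preA_upd | by []].
rewrite (islin_Mg _ _).1.
exact: (f_equal2 (fun u v : H => u + v) e1 e2).
Qed.

Lemma claim n t s : (0 < n)%N -> forall a b, exists V : H,
  Mg (preA a) (postB b) (Cw n t s) = V * y /\
  Mg (preA (gamma t a)) (postB (gamma t b)) (Cw n 0 s) = gamma t V * y.
Proof.
move=> n0; elim: s => [|c s IH] a b /=.
  exists 0; rewrite (islin0 (islin_Mg _ _)) (islin0 (islin_Mg _ _)) gamma0 mul0r.
  by split.
have [V1 [h1 h2]] := IH (a * gammainv t (wd [:: c])) b.
exists (sg c (VC n t a (gammainv t (wd s) * b)) + V1); split.
  rewrite Mg_stepAB Mg_sg (Mg_Cx _ _ _ n0) h1.
  exact: sgG.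
rewrite Mg_stepAB !gammainv0.
rewrite gamma_mul gammaK in h2.
rewrite Mg_sg (Mg_Cx _ _ _ n0) h2 gammaD gamma_sg gamma_VC gamma_mul gammaK.
exact: sgG.
Qed.

Lemma Mg1 n (T : Tn n) : Mg (fun _ => 1) (fun _ => 1) T = Mg (preA 1) (postB 1) T.
Proof. by apply: Mg_ext => i; rewrite /preA /postB; [case: (i == ord_max) | case: (i == ord0)]. Qed.

Unset Implicit Arguments.

Theorem lemma3p1 (n : nat) (w : H) :
  (0 < n)%N -> S tv (rho n tv w) = rho n 0 w.
Proof.
move=> n0; rewrite /rho !Mn_Mg /C.
rewrite (lin_comp _ _ (islin_Mg _ _)) (lin_comp _ _ (islin_Mg _ _)) (lin_comp _ _ (islin_S tv)).
apply: lin_ext => m.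
have [V [h1 h2]] := claim tv (fmonom_val m) n0 1 1.
rewrite gamma1 in h2.
rewrite !Mg1 h1 S_lem h2.
reflexivity.
Qed.
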